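(* Let $\Gamma=\mathrm{SL}_2(\mathbb Z)$, $\Gamma_i=\langle\gamma_i\rangle$ with $\gamma_i=\begin{pmatrix}0&1\\-1&0\end{pmatrix}$, $\nu_{\mathbb H}\begin{pmatrix}a&b\\c&d\end{pmatrix}=a^2+b^2+c^2+d^2$, and for $\gamma=\begin{pmatrix}a&b\\c&d\end{pmatrix}$ let $z_1(\gamma)=(a+d)+i(b-c)$, $z_2(\gamma)=(a-d)-i(b+c)$. Let $n\ge2$ with $n\equiv3\bmod4$ and $$C_n=\{z_1\in\mathbb Z[i]: N(z_1)=n+2,\ z_1\text{ primary}\}\times\{z_2\in\mathbb Z[i]: N(z_2)=n-2,\ z_2\text{ primary}\}.$$ Then there exist unique representatives of the double cosets in $\Gamma_i\backslash\Gamma/\Gamma_i$ with $\nu_{\mathbb H}(\gamma)=n$ such that the map $\gamma\mapsto(z_1(\gamma),z_2(\gamma))$ from this set of representatives to $C_n$ is a bijection.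
   Context: $N(z)=z\bar z$; a Gaussian integer $w$ is primary if $w\equiv1\bmod(1+i)^3$. $\nu_{\mathbb H}$ is constant on double cosets $\Gamma_i\gamma\Gamma_i$. *)

(* Defs.v *)
From mathcomp Require Import all_boot all_order all_algebra.
Set Implicit Arguments. Unset Strict Implicit. Unset Printing Implicit Defensive.
Import Order.TTheory GRing.Theory Num.Theory.
Local Open Scope ring_scope.

Definition inSL2Z (g : 'M[int]_2) : Prop := \det g = 1.

Definition ma (g : 'M[int]_2) : int := g ord0 ord0.
Definition mb (g : 'M[int]_2) : int := g ord0 ord_max.
Definition mc (g : 'M[int]_2) : int := g ord_max ord0.
Definition md (g : 'M[int]_2) : int := g ord_max ord_max.

Definition gamma_i : 'M[int]_2 :=
  \matrix_(i < 2, j < 2) (if (i == ord0) && (j == ord_max) then 1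
                          else if (i == ord_max) && (j == ord0) then -1 else 0).

(* Gamma_i = <gamma_i>; gamma_i has finite order (4), so nat powers give the whole group *)
Definition in_Gamma_i (h : 'M[int]_2) : Prop := exists k : nat, h = gamma_i ^+ k.

Definition same_dcoset (g g' : 'M[int]_2) : Prop :=
  exists h1 h2, in_Gamma_i h1 /\ in_Gamma_i h2 /\ g' = h1 * g * h2.

Definition nuH (g : 'M[int]_2) : int :=
  ma g ^+ 2 + mb g ^+ 2 + mc g ^+ 2 + md g ^+ 2.

(* Gaussian integers x + i y as pairs (x, y) *)
Definition gauss := (int * int)%type.
Definition gmul (z w : gauss) : gauss := (z.1 * w.1 - z.2 * w.2, z.1 * w.2 + z.2 * w.1).
Definition gnorm (z : gauss) : int := z.1 ^+ 2 + z.2 ^+ 2.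
Definition gdvd (d z : gauss) : Prop := exists q : gauss, z = gmul d q.
Definition one_plus_i_cubed : gauss := gmul (1, 1) (gmul (1, 1) (1, 1)).
Definition primary (w : gauss) : Prop := gdvd one_plus_i_cubed (w.1 - 1, w.2).

Definition z1 (g : 'M[int]_2) : gauss := (ma g + md g, mb g - mc g).
Definition z2 (g : 'M[int]_2) : gauss := (ma g - md g, - (mb g + mc g)).

Definition in_Cn (n : int) (p : gauss * gauss) : Prop :=
  (gnorm p.1 = n + 2 /\ primary p.1) /\ (gnorm p.2 = n - 2 /\ primary p.2).

(* Main.v *)
Require Import Defs.
From mathcomp Require Import all_boot all_order all_algebra zify ring lra.
Import Order.TTheory GRing.Theory Num.Theory.
Local Open Scope ring_scope.

Lemma det22 (g : 'M[int]_2) : \det g = ma g * md g - mb g * mc g.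
Proof.
rewrite /ma /mb /mc /md.
rewrite (expand_det_row _ ord0) !big_ord_recl big_ord0 /cofactor !det_mx11 !mxE /=.
have -> : lift (lift ord0 ord0) (0 : 'I_1) = ord0 :> 'I_2 by apply/val_inj.
have -> : lift ord0 (0 : 'I_1) = ord_max :> 'I_2 by apply/val_inj.
rewrite /= expr0 expr1; ring.
Qed.

Lemma ord2 (i : 'I_2) : i = ord0 \/ i = ord_max.
Proof. case: i => [[|[|k]] H]; [left|right|]; try by apply/val_inj. by []. Qed.

Lemma mxeq (g g' : 'M[int]_2) : ma g = ma g' -> mb g = mb g' -> mc g = mc g' -> md g = md g' -> g = g'.
Proof.
move=> Ha Hb Hc Hd; apply/matrixP => i j.
by case: (ord2 i) => ->; case: (ord2 j) => ->.
Qed.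

Lemma mul22 (A B : 'M[int]_2) i j : (A * B) i j = A i ord0 * B ord0 j + A i ord_max * B ord_max j.
Proof.
rewrite -mulmxE mxE !big_ord_recl big_ord0 addr0.
by have -> : lift ord0 (ord0 : 'I_1) = ord_max :> 'I_2 by apply/val_inj.
Qed.

Lemma gi00 : gamma_i ord0 ord0 = 0. Proof. by rewrite mxE. Qed.
Lemma gi01 : gamma_i ord0 ord_max = 1. Proof. by rewrite mxE. Qed.
Lemma gi10 : gamma_i ord_max ord0 = -1. Proof. by rewrite mxE. Qed.
Lemma gi11 : gamma_i ord_max ord_max = 0. Proof. by rewrite mxE. Qed.

Definition R (w : gauss) : gauss := (- w.2, w.1).
Definition R' (w : gauss) : gauss := (w.2, - w.1).

Lemma Lz (g : 'M[int]_2) : z1 (gamma_i * g) = R (z1 g) /\ z2 (gamma_i * g) = R (z2 g).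
Proof.
rewrite /z1 /z2 /R /ma /mb /mc /md !mul22 gi00 gi01 gi10 gi11 /=.
split; congr pair; ring.
Qed.

Lemma Rz (g : 'M[int]_2) : z1 (g * gamma_i) = R (z1 g) /\ z2 (g * gamma_i) = R' (z2 g).
Proof.
rewrite /z1 /z2 /R /R' /ma /mb /mc /md !mul22 gi00 gi01 gi10 gi11 /=.
split; congr pair; ring.
Qed.

Lemma opic : one_plus_i_cubed = (- (1+1), 1+1).
Proof. by []. Qed.

Lemma primaryP x y : primary (x, y) -> exists q1 q2 : int, x = 1 - 2*q1 - 2*q2 /\ y = 2*q1 - 2*q2.
Proof.
rewrite /primary /gdvd opic.
case=> [[q1 q2]] /=; case=> H1 H2. exists q1, q2. split; lia.
Qed.

Lemma primary_mod x y : ((x %% 4 = 1 /\ y %% 4 = 0) \/ (x %% 4 = 3 /\ y %% 4 = 2))%Z -> primary (x, y).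
Proof.
move=> H; rewrite /primary /gdvd opic.
have Ex := divz_eq x 4; have Ey := divz_eq y 4.
set u := (x %/ 4)%Z in Ex *; set v := (y %/ 4)%Z in Ey *. clearbody u v.
case: H => [[H1 H2]|[H1 H2]]; rewrite H1 in Ex; rewrite H2 in Ey.
- exists (v - u, - u - v); rewrite /gmul /=; congr pair; lia.
- exists (v - u, - u - v - 1); rewrite /gmul /=; congr pair; lia.
Qed.

Lemma sqpar (a : int) : exists t, a ^+ 2 = a + 2 * t.
Proof.
have [H|H] : (a %% 2 = 0 \/ a %% 2 = 1)%Z by lia.
- have [q ->] : exists q, a = q * 2 by exists (divz a 2); lia.
  exists (q * (q * 2 - 1)); ring.
- have [q ->] : exists q, a = q * 2 + 1 by exists (divz a 2); lia.
  exists (q * (q * 2 + 1)); ring.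
Qed.

Definition prim (w : gauss) : gauss :=
  let (x, y) := w in
  if (x %% 2 == 1)%Z then (if ((x + y) %% 4 == 1)%Z then (x, y) else (- x, - y))
  else (if ((x - y) %% 4 == 1)%Z then (- y, x) else (y, - x)).

Definition oddsum (w : gauss) : Prop := ((w.1 + w.2) %% 2 = 1)%Z.

Lemma oddsum_R w : oddsum w -> oddsum (R w).
Proof. case: w => x y; rewrite /oddsum /R /=; lia. Qed.
Lemma oddsum_R' w : oddsum w -> oddsum (R' w).
Proof. case: w => x y; rewrite /oddsum /R' /=; lia. Qed.

Ltac primtac := repeat (case: ifP => ?); first [ by exfalso; lia | congr pair; lia ].

Lemma prim_R w : oddsum w -> prim (R w) = prim w.
Proof. case: w => x y; rewrite /oddsum /R /prim /= => H; primtac. Qed.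
Lemma prim_R' w : oddsum w -> prim (R' w) = prim w.
Proof. case: w => x y; rewrite /oddsum /R' /prim /= => H; primtac. Qed.

Lemma prim_primary w : primary w -> prim w = w.
Proof.
case: w => x y /primaryP [q1 [q2 [-> ->]]]; rewrite /prim; primtac.
Qed.

Lemma iterR_inv k w : oddsum w -> oddsum (iter k R w) /\ prim (iter k R w) = prim w.
Proof.
move=> H; elim: k => [|k [IH1 IH2]]; first by split.
rewrite iterS; split; [exact: oddsum_R | by rewrite prim_R].
Qed.
Lemma iterR'_inv k w : oddsum w -> oddsum (iter k R' w) /\ prim (iter k R' w) = prim w.
Proof.
move=> H; elim: k => [|k [IH1 IH2]]; first by split.
rewrite iterS; split; [exact: oddsum_R' | by rewrite prim_R'].
Qed.

Lemma gnorm_iterR k w : Defs.gnorm (iter k R w) = Defs.gnorm w.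
Proof. elim: k => [|k IH] //; rewrite iterS -IH /Defs.gnorm /R /=; ring. Qed.
Lemma gnorm_iterR' k w : Defs.gnorm (iter k R' w) = Defs.gnorm w.
Proof. elim: k => [|k IH] //; rewrite iterS -IH /Defs.gnorm /R' /=; ring. Qed.

Lemma powL k g : z1 (gamma_i ^+ k * g) = iter k R (z1 g) /\ z2 (gamma_i ^+ k * g) = iter k R (z2 g).
Proof.
elim: k => [|k [IH1 IH2]]; first by rewrite expr0 mul1r.
rewrite exprS -mulrA; case: (Lz (gamma_i ^+ k * g)) => -> ->; by rewrite IH1 IH2.
Qed.

Lemma powR l g : z1 (g * gamma_i ^+ l) = iter l R (z1 g) /\ z2 (g * gamma_i ^+ l) = iter l R' (z2 g).
Proof.
elim: l => [|l [IH1 IH2]]; first by rewrite expr0 mulr1.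
rewrite exprSr mulrA; case: (Rz (g * gamma_i ^+ l)) => -> ->; by rewrite IH1 IH2.
Qed.

Lemma powLR k l g : z1 (gamma_i ^+ k * g * gamma_i ^+ l) = iter l R (iter k R (z1 g))
  /\ z2 (gamma_i ^+ k * g * gamma_i ^+ l) = iter l R' (iter k R (z2 g)).
Proof. case: (powR l (gamma_i ^+ k * g)) => -> ->; case: (powL k g) => -> ->; by []. Qed.

Lemma z_inj g g' : z1 g = z1 g' -> z2 g = z2 g' -> g = g'.
Proof. rewrite /z1 /z2; case=> H1 H2; case=> H3 H4; apply: mxeq; lia. Qed.

Lemma norms g : inSL2Z g -> Defs.gnorm (z1 g) = nuH g + 2 /\ Defs.gnorm (z2 g) = nuH g - 2.
Proof.
rewrite /inSL2Z det22 => H; split.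
- transitivity (nuH g + 2 * (ma g * md g - mb g * mc g)).
    rewrite /Defs.gnorm /z1 /nuH /=; ring.
  by rewrite H mulr1.
- transitivity (nuH g - 2 * (ma g * md g - mb g * mc g)).
    rewrite /Defs.gnorm /z2 /nuH /=; ring.
  by rewrite H mulr1.
Qed.

Lemma odd_z g : (nuH g %% 2 = 1)%Z ->
  oddsum (z1 g) /\ oddsum (z2 g) /\ (((z1 g).1 %% 2) = ((z2 g).1 %% 2))%Z.
Proof.
rewrite /nuH /oddsum /z1 /z2 /= => H.
have [ta Ha] := sqpar (ma g); have [tb Hb] := sqpar (mb g).
have [tc Hc] := sqpar (mc g); have [td Hd] := sqpar (md g).
rewrite Ha Hb Hc Hd in H; lia.
Qed.

Lemma ex_prim x y : oddsum (x, y) ->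
  ((x %% 2 = 1)%Z /\ (primary (x, y) \/ primary (- x, - y))) \/
  ((x %% 2 = 0)%Z /\ (primary (- y, x) \/ primary (y, - x))).
Proof.
rewrite /oddsum /= => H.
have [Hx|Hx] : ((x %% 2 = 1) \/ (x %% 2 = 0))%Z by lia.
- left; split => //.
  have [H4|H4] : (((x + y) %% 4 = 1) \/ ((x + y) %% 4 = 3))%Z by lia.
  + left; apply: primary_mod; lia.
  + right; apply: primary_mod; lia.
- right; split => //.
  have [H4|H4] : (((x - y) %% 4 = 1) \/ ((x - y) %% 4 = 3))%Z by lia.
  + left; apply: primary_mod; lia.
  + right; apply: primary_mod; lia.
Qed.

Lemma primary_ext w w' : primary w -> w = w' -> primary w'.
Proof. by move=> H <-. Qed.

Lemma canon n k l g : (nuH g %% 2 = 1)%Z ->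
  in_Cn n (z1 (gamma_i ^+ k * g * gamma_i ^+ l), z2 (gamma_i ^+ k * g * gamma_i ^+ l)) ->
  z1 (gamma_i ^+ k * g * gamma_i ^+ l) = prim (z1 g) /\ z2 (gamma_i ^+ k * g * gamma_i ^+ l) = prim (z2 g).
Proof.
move=> Hn [[_ P1] [_ P2]]; simpl in P1, P2.
have [O1 [O2 _]] := odd_z g Hn.
move: P1 P2; case: (powLR k l g) => -> -> P1 P2.
rewrite -(prim_primary _ P1) -(prim_primary _ P2).
case: (iterR_inv k _ O1) => Q1 E1; case: (iterR_inv k _ O2) => Q2 E2.
by case: (iterR_inv l _ Q1) => _ ->; case: (iterR'_inv l _ Q2) => _ ->; rewrite E1 E2.
Qed.

Lemma exist_case n k l g : inSL2Z g -> nuH g = n -> (n %% 2 = 1)%Z ->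
  primary (iter l R (iter k R (z1 g))) -> primary (iter l R' (iter k R (z2 g))) ->
  exists g', (same_dcoset g g' /\ in_Cn n (z1 g', z2 g')) /\
       forall g'', same_dcoset g g'' -> in_Cn n (z1 g'', z2 g'') -> g'' = g'.
Proof.
move=> Hsl Hnu Hn P1 P2.
have Hn' : (nuH g %% 2 = 1)%Z by rewrite Hnu.
have [N1 N2] := norms g Hsl.
have Hc : in_Cn n (z1 (gamma_i ^+ k * g * gamma_i ^+ l), z2 (gamma_i ^+ k * g * gamma_i ^+ l)).
  rewrite /in_Cn /=; case: (powLR k l g) => -> ->.
  by rewrite gnorm_iterR' !gnorm_iterR N1 N2 Hnu.
exists (gamma_i ^+ k * g * gamma_i ^+ l); split.
  split => //; exists (gamma_i ^+ k), (gamma_i ^+ l); split; [by exists k | split; [by exists l | by []]].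
move=> g'' [h1 [h2 [[k' ->] [[l' ->] ->]]]] Hc'.
have [E1 E2] := canon n k l g Hn' Hc; have [E1' E2'] := canon n k' l' g Hn' Hc'.
by apply: z_inj; rewrite ?E1 ?E2 ?E1' ?E2'.
Qed.

Definition mk (a b c d : int) : 'M[int]_2 :=
  \matrix_(i < 2, j < 2) (if i == ord0 then (if j == ord0 then a else b) else (if j == ord0 then c else d)).
Lemma mk_a a b c d : ma (mk a b c d) = a. Proof. by rewrite /ma mxE. Qed.
Lemma mk_b a b c d : mb (mk a b c d) = b. Proof. by rewrite /mb mxE. Qed.
Lemma mk_c a b c d : mc (mk a b c d) = c. Proof. by rewrite /mc mxE. Qed.
Lemma mk_d a b c d : md (mk a b c d) = d. Proof. by rewrite /md mxE. Qed.

Ltac paireq := apply/eqP; rewrite xpair_eqE; apply/andP; split; apply/eqP; ring.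

Theorem lemma3p5 (n : int) (hn2 : 2 <= n) (hn4 : (n %% 4)%Z = 3) :
  (forall g : 'M[int]_2, inSL2Z g -> nuH g = n ->
     exists g', (same_dcoset g g' /\ in_Cn n (z1 g', z2 g')) /\
       forall g'', same_dcoset g g'' -> in_Cn n (z1 g'', z2 g'') -> g'' = g')
  /\ (forall g g' : 'M[int]_2, inSL2Z g -> inSL2Z g' -> nuH g = n -> nuH g' = n ->
        in_Cn n (z1 g, z2 g) -> in_Cn n (z1 g', z2 g') ->
        (z1 g, z2 g) = (z1 g', z2 g') -> g = g')
  /\ (forall p : gauss * gauss, in_Cn n p ->
        exists g : 'M[int]_2, [/\ inSL2Z g, nuH g = n & (z1 g, z2 g) = p]).
Proof.
have Hn : (n %% 2 = 1)%Z by lia.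
split; [|split].
- move=> g Hsl Hnu.
  have Hn' : (nuH g %% 2 = 1)%Z by rewrite Hnu.
  have [O1 [O2 Hp]] := odd_z g Hn'.
  move: O1 O2 Hp; case E1: (z1 g) => [x1 y1]; case E2: (z2 g) => [x2 y2] /= O1 O2 Hp.
  case: (ex_prim x1 y1 O1) => [[Hx1 [P1|P1]] | [Hx1 [P1|P1]]];
  case: (ex_prim x2 y2 O2) => [[Hx2 [P2|P2]] | [Hx2 [P2|P2]]]; try (exfalso; lia).
  + apply: (exist_case n 0 0 g Hsl Hnu Hn); rewrite ?E1 ?E2;
      [apply: (primary_ext _ _ P1) | apply: (primary_ext _ _ P2)]; rewrite /= /R /R' /=; paireq.
  + apply: (exist_case n 3 1 g Hsl Hnu Hn); rewrite ?E1 ?E2;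
      [apply: (primary_ext _ _ P1) | apply: (primary_ext _ _ P2)]; rewrite /= /R /R' /=; paireq.
  + apply: (exist_case n 1 1 g Hsl Hnu Hn); rewrite ?E1 ?E2;
      [apply: (primary_ext _ _ P1) | apply: (primary_ext _ _ P2)]; rewrite /= /R /R' /=; paireq.
  + apply: (exist_case n 2 0 g Hsl Hnu Hn); rewrite ?E1 ?E2;
      [apply: (primary_ext _ _ P1) | apply: (primary_ext _ _ P2)]; rewrite /= /R /R' /=; paireq.
  + apply: (exist_case n 1 0 g Hsl Hnu Hn); rewrite ?E1 ?E2;
      [apply: (primary_ext _ _ P1) | apply: (primary_ext _ _ P2)]; rewrite /= /R /R' /=; paireq.
  + apply: (exist_case n 0 1 g Hsl Hnu Hn); rewrite ?E1 ?E2;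
      [apply: (primary_ext _ _ P1) | apply: (primary_ext _ _ P2)]; rewrite /= /R /R' /=; paireq.
  + apply: (exist_case n 2 1 g Hsl Hnu Hn); rewrite ?E1 ?E2;
      [apply: (primary_ext _ _ P1) | apply: (primary_ext _ _ P2)]; rewrite /= /R /R' /=; paireq.
  + apply: (exist_case n 3 0 g Hsl Hnu Hn); rewrite ?E1 ?E2;
      [apply: (primary_ext _ _ P1) | apply: (primary_ext _ _ P2)]; rewrite /= /R /R' /=; paireq.
- move=> g g' _ _ _ _ _ _ H; case: H => H1 H2 H3 H4; apply: mxeq; lia.
- case=> [[x1 y1] [x2 y2]] [[N1 P1] [N2 P2]] /=; simpl in N1, N2.
  have [q1 [q2 [Ex1 Ey1]]] := primaryP x1 y1 P1.
  have [r1 [r2 [Ex2 Ey2]]] := primaryP x2 y2 P2.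
  exists (mk (1 - q1 - q2 - r1 - r2) (q1 - q2 - r1 + r2) (- (q1 - q2) - (r1 - r2)) (- q1 - q2 + r1 + r2)).
  subst x1 y1 x2 y2.
  split.
  + rewrite /inSL2Z det22 mk_a mk_b mk_c mk_d.
    set X := (_ * _ - _ * _).
    have E : 4 * X = Defs.gnorm (1 - 2 * q1 - 2 * q2, 2 * q1 - 2 * q2)
                     - Defs.gnorm (1 - 2 * r1 - 2 * r2, 2 * r1 - 2 * r2).
      rewrite /X /Defs.gnorm /=; ring.
    rewrite N1 N2 in E; lia.
  + have E : 2 * nuH (mk (1 - q1 - q2 - r1 - r2) (q1 - q2 - r1 + r2) (- (q1 - q2) - (r1 - r2)) (- q1 - q2 + r1 + r2))
        = Defs.gnorm (1 - 2 * q1 - 2 * q2, 2 * q1 - 2 * q2)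
          + Defs.gnorm (1 - 2 * r1 - 2 * r2, 2 * r1 - 2 * r2).
      rewrite /nuH mk_a mk_b mk_c mk_d /Defs.gnorm /=; ring.
    rewrite N1 N2 in E; lia.
  + rewrite /z1 /z2 mk_a mk_b mk_c mk_d.
    apply: injective_projections => /=; apply: injective_projections => /=; ring.
Qed.
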